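(* Let $G=(V,E)$ be a finite loopless graph with $V\ne\emptyset$ and edge weights $\mathbf{v}=(v_e)_{e\in E}$, and let $q,q_1,q_2$ be indeterminates. Then \[ Z_G(q_1+q_2,\mathbf{v})=\sum_{W\subseteq V}Z_{G[W]}(q_1,\mathbf{v})\,Z_{G[V\setminus W]}(q_2,\mathbf{v}). \] Moreover, for each $i\in V$, \[ \widehat{Z}_G(q_1+q_2,\mathbf{v})=\sum_{W\subseteq V,\ W\ni i}\widehat{Z}_{G[W]}(q_1,\mathbf{v})\,Z_{G[V\setminus W]}(q_2,\mathbf{v}), \] and in particular \[ Z_G(q,\mathbf{v})=\sum_{W\subseteq V,\ W\ni i}q\,C_{G[W]}(\mathbf{v})\,Z_{G[V\setminus W]}(q,\mathbf{v}). \] Also \[ |V|\,Z_G(q_2,\mathbf{v})=\sum_{\emptyset\ne W\subseteq V}\bigl[(q_1+q_2)|W|-q_1|V|\bigr]\widehat{Z}_{G[W]}(q_1,\mathbf{v})\,Z_{G[V\setminus W]}(q_2,\mathbf{v}). \]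
   Context: For a finite graph $H$: $Z_H(q,\mathbf{v})=\sum_{A\subseteq E(H)}q^{k(A)}\prod_{e\in A}v_e$ with $k(A)$ the number of connected components of $(V(H),A)$; $\widehat{Z}_H(q,\mathbf{v})=\sum_{A\subseteq E(H)}q^{k(A)-1}\prod_{e\in A}v_e$ for $V(H)\ne\emptyset$; $C_H(\mathbf{v})=\sum_{A\subseteq E(H),\,k(A)=1}\prod_{e\in A}v_e$. For the empty graph (no vertices), $Z=1$. $G[W]$ denotes the induced subgraph on $W$. *)

(* Defs.v *)
From mathcomp Require Import all_boot all_order all_algebra.
Set Implicit Arguments. Unset Strict Implicit. Unset Printing Implicit Defensive.
Import GRing.Theory.
Local Open Scope ring_scope.

(* A finite loopless multigraph: vertex type V, edge type E, and
   [ends e] gives the two endpoints of edge e (looplessness is a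
   hypothesis of the theorem).  Subgraphs induced by W : {set V}. *)
Section Potts.
Variables (V E : finType) (ends : E -> V * V).

Definition ind_edges (W : {set V}) : {set E} :=
  [set e | ((ends e).1 \in W) && ((ends e).2 \in W)].

Definition adj (W : {set V}) (A : {set E}) : rel V :=
  fun x y => [&& x \in W, y \in W &
     [exists e in A, (ends e == (x, y)) || (ends e == (y, x))]].

Definition ncomp (W : {set V}) (A : {set E}) : nat :=
  #| [set [set y in W | connect (adj W A) x y] | x in W] |.

Variable R : comRingType.
Variable v : E -> R.

Definition Zpot (W : {set V}) (q : R) : R :=
  \sum_(A : {set E} | A \subset ind_edges W)
     q ^+ ncomp W A * \prod_(e in A) v e.

(* \hat Z_{G[W]}(q, v) = sum q^{k(A)-1} ...  (used only for W nonempty) *)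
Definition Zhat (W : {set V}) (q : R) : R :=
  \sum_(A : {set E} | A \subset ind_edges W)
     q ^+ (ncomp W A).-1 * \prod_(e in A) v e.

Definition Cpot (W : {set V}) : R :=
  \sum_(A : {set E} | (A \subset ind_edges W) && (ncomp W A == 1%N))
     \prod_(e in A) v e.
End Potts.

(* Main.v *)
Require Import Defs.
From mathcomp Require Import all_boot all_order all_algebra.
From mathcomp Require Import ring.
Import GRing.Theory.
Local Open Scope ring_scope.
Set Implicit Arguments. Unset Strict Implicit. Unset Printing Implicit Defensive.

Section Graph.
Variables (V E : finType) (ends : E -> V * V).
Implicit Types (A : {set E}) (W : {set V}) (x y : V) (e : E) (S : {set {set V}}).

Definition crossfree (W : {set V}) (A : {set E}) :=
  [forall e in A, ((ends e).1 \in W) == ((ends e).2 \in W)].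

Definition cT (A : {set E}) := connect (adj ends [set: V] A).
Definition vcomp (A : {set E}) (x : V) : {set V} := [set y | cT A x y].
Definition Pc (A : {set E}) : {set {set V}} := vcomp A @: [set: V].

Lemma adj_sym W A : symmetric (adj ends W A).
Proof.
move=> x y; rewrite /adj andbCA; congr (_ && (_ && _)).
by apply: eq_existsb => e; rewrite orbC.
Qed.

Lemma cT_sym A : connect_sym (adj ends [set: V] A).
Proof. exact/sym_connect_sym/adj_sym. Qed.

Lemma edge_adj A e : e \in A -> adj ends [set: V] A (ends e).1 (ends e).2.
Proof.
move=> eA; rewrite /adj !in_setT /=; apply/existsP; exists e; rewrite eA /=.
by case: (ends e) => a b; rewrite eqxx.
Qed.

Lemma adjT_cf W A x y : crossfree W A -> adj ends [set: V] A x y ->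
  (x \in W) = (y \in W).
Proof.
move=> /forall_inP cf; rewrite /adj !in_setT /= => /existsP[e /andP[eA]].
case/orP => /eqP Ee; move: (cf e eA); rewrite Ee /= => /eqP // ->.
Qed.

Lemma path_cf W A p x : crossfree W A -> x \in W ->
  path (adj ends [set: V] A) x p -> path (adj ends W A) x p.
Proof.
move=> cf; elim: p x => //= y p IH x xW /andP[axy pp].
have yW : y \in W by rewrite -(adjT_cf cf axy).
rewrite IH // andbT; move: axy; by rewrite /adj xW yW !in_setT.
Qed.

Lemma conW W A x y : crossfree W A -> x \in W ->
  connect (adj ends W A) x y = cT A x y.
Proof.
move=> cf xW; apply/idP/idP.
  apply: connect_sub => a b; rewrite {1}/adj => /and3P[_ _ h].
  by apply: connect1; rewrite /adj !in_setT.
case/connectP => p pp ->; apply/connectP; exists p => //; exact: path_cf.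
Qed.

Lemma c_closed W A x y : crossfree W A -> cT A x y -> x \in W -> y \in W.
Proof.
move=> cf /connectP[p pp ->]; elim: p x pp => //= z p IH x /andP[axz pp] xW.
by apply: IH => //; rewrite -(adjT_cf cf axz).
Qed.

Lemma compE A x y : cT A x y -> vcomp A y = vcomp A x.
Proof.
move=> cxy; apply/setP => z; rewrite !inE /cT.
by rewrite (same_connect (@cT_sym A) cxy).
Qed.

Lemma comp_self A x : x \in vcomp A x.
Proof. by rewrite inE /cT connect0. Qed.

Lemma ncomp_cf W A : crossfree W A -> ncomp ends W A = #|vcomp A @: W|.
Proof.
move=> cf; rewrite /ncomp (@eq_in_imset _ _ _ (vcomp A)) // => x xW.
apply/setP => y; rewrite !inE (conW _ cf xW); apply/andP/idP => [[]//|h].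
by split=> //; apply: c_closed cf h xW.
Qed.

Lemma cf_setT A : crossfree [set: V] A.
Proof. by apply/forall_inP => e _; rewrite !in_setT. Qed.

Lemma cf_setC W A : crossfree W A -> crossfree (~: W) A.
Proof.
move/forall_inP => cf; apply/forall_inP => e eA; rewrite !inE.
by move: (cf e eA); do 2 case: (_ \in W).
Qed.

Lemma ncomp_T A : ncomp ends [set: V] A = #|Pc A|.
Proof. exact: ncomp_cf (cf_setT A). Qed.

Lemma compC W A : crossfree W A -> vcomp A @: (~: W) = Pc A :\: vcomp A @: W.
Proof.
move=> cf; apply/setP => X; rewrite inE; apply/imsetP/andP.
  case=> x; rewrite inE => xW ->; split; last by rewrite imset_f ?in_setT.
  apply/imsetP => [[y yW eq]]; move: (comp_self A x); rewrite eq inE => cyx.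
  by rewrite (c_closed cf cyx yW) in xW.
case=> nX /imsetP[x _ eX]; exists x => //; rewrite inE; apply/negP => xW.
by rewrite eX imset_f in nX.
Qed.

Lemma memi W A i : crossfree W A -> (i \in W) = (vcomp A i \in vcomp A @: W).
Proof.
move=> cf; apply/idP/imsetP => [iW|[x xW eq]]; first by exists i.
by move: (comp_self A i); rewrite eq inE => h; apply: c_closed cf h xW.
Qed.

Lemma comp_cover A S : S \subset Pc A -> vcomp A @: cover S = S.
Proof.
move=> sSP; apply/setP => X; apply/imsetP/idP.
  case=> y /bigcupP[Y YS yY] ->.
  have /imsetP[x _ eY] := subsetP sSP Y YS.
  by move: yY; rewrite eY inE => /compE ->; rewrite -eY.
move=> XS; have /imsetP[x _ eX] := subsetP sSP X XS; exists x => //.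
by apply/bigcupP; exists X => //; rewrite eX comp_self.
Qed.

Lemma cover_cf W A : (cover (vcomp A @: W) == W) = crossfree W A.
Proof.
apply/eqP/idP => [eW|cf].
  apply/forall_inP => e eA; have h := edge_adj eA.
  apply/eqP; apply/idP/idP => [aW|bW].
    rewrite -eW; apply/bigcupP; exists (vcomp A (ends e).1); first exact: imset_f.
    by rewrite inE /cT connect1.
  rewrite -eW; apply/bigcupP; exists (vcomp A (ends e).2); first exact: imset_f.
  by rewrite inE /cT connect1 // adj_sym.
apply/setP => y; apply/bigcupP/idP => [[X /imsetP[x xW ->]]|yW].
  by rewrite inE => h; apply: c_closed cf h xW.
by exists (vcomp A y); rewrite ?imset_f ?comp_self.
Qed.

Lemma reindexW (R : nmodType) A (F : {set {set V}} -> R) :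
  \sum_(W : {set V} | crossfree W A) F (vcomp A @: W) = \sum_(S : {set {set V}} | S \subset Pc A) F S.
Proof.
symmetry; rewrite (reindex_onto (fun W : {set V} => vcomp A @: W) (fun S : {set {set V}} => cover S)).
  apply: eq_bigl => W; rewrite cover_cf andbC; case: (crossfree W A) => //=.
  by apply/subsetP => X /imsetP[x _ ->]; rewrite imset_f ?in_setT.
exact: comp_cover.
Qed.

End Graph.

Section Alg.
Variable R : comRingType.

Lemma prod_split (T : finType) (P : {set T}) (a b : T -> R) :
  \prod_(X in P) (a X + b X) =
  \sum_(S : {set T} | S \subset P) (\prod_(X in S) a X * \prod_(X in P :\: S) b X).
Proof.
pose a' X := if X \in P then a X else 0.
pose b' X := if X \in P then b X else 1.
transitivity (\prod_X (a' X + b' X)).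
  rewrite big_mkcond; apply: eq_bigr => X _; rewrite /a' /b'.
  by case: (X \in P) => //; rewrite add0r.
rewrite bigA_distr (bigID (fun J : {set T} => J \subset P)) /=.
rewrite [X in _ + X]big1 ?addr0; last first.
  move=> J /subsetPn[X XJ XP].
  by rewrite (bigD1 X) //= XJ /a' (negbTE XP) mul0r.
apply: eq_bigr => J sJP.
rewrite (bigID (mem J)) /=; congr (_ * _).
  by apply: eq_bigr => X XJ; rewrite XJ /a' (subsetP sJP X XJ).
rewrite [RHS]big_mkcond [LHS]big_mkcond; apply: eq_bigr => X _.
rewrite !inE /b'; case: (X \in J) => //=; by case: (X \in P).
Qed.

Lemma binom_sets (T : finType) (P : {set T}) (q1 q2 : R) :
  \sum_(S : {set T} | S \subset P) q1 ^+ #|S| * q2 ^+ #|P :\: S| = (q1 + q2) ^+ #|P|.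
Proof.
rewrite -prodr_const (prod_split P (fun=> q1) (fun=> q2)).
by apply: eq_bigr => S _; rewrite !prodr_const.
Qed.

Lemma binom_sets1 (T : finType) (P : {set T}) (p0 : T) (q1 q2 : R) : p0 \in P ->
  \sum_(S : {set T} | S \subset P)
     (if p0 \in S then q1 ^+ #|S|.-1 * q2 ^+ #|P :\: S| else 0)
  = (q1 + q2) ^+ #|P|.-1.
Proof.
move=> p0P.
have := prod_split P (fun X => if X == p0 then 1 else q1) (fun X => if X == p0 then 0 else q2).
rewrite (big_setD1 p0) //= eqxx addr0 mul1r.
rewrite (eq_bigr (fun=> q1 + q2)); last first.
  by move=> X; rewrite !inE => /andP[/negbTE -> _].
rewrite prodr_const (cardsD1 p0 P) p0P /= => ->.
apply: eq_bigr => S sSP; case p0S: (p0 \in S).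
  rewrite (big_setD1 p0) //= eqxx mul1r (cardsD1 p0 S) p0S /=.
  rewrite (eq_bigr (fun=> q1)); last first.
    by move=> X; rewrite !inE => /andP[/negbTE -> _].
  rewrite (eq_bigr (fun=> q2) (P := fun X => X \in P :\: S)); last first.
    move=> X; rewrite !inE => /andP[XS _]; case: eqP XS => // ->; by rewrite p0S.
  by rewrite !prodr_const.
rewrite [X in _ * X](big_setD1 p0) /=; last by rewrite !inE p0S.
by rewrite eqxx mul0r mulr0.
Qed.

Lemma sum_split (T : finType) (X Y : {set T}) (F G : {set T} -> R) :
  [disjoint X & Y] ->
  (\sum_(A1 : {set T} | A1 \subset X) F A1) * (\sum_(A2 : {set T} | A2 \subset Y) G A2)
  = \sum_(A : {set T} | A \subset X :|: Y) F (A :&: X) * G (A :&: Y).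
Proof.
move=> dXY; rewrite big_distrlr /= pair_big_dep /=; symmetry.
rewrite (reindex_onto (fun p : {set T} * {set T} => p.1 :|: p.2)
                      (fun A => (A :&: X, A :&: Y))) /=; last first.
  by move=> A sA; rewrite -setIUr; apply/setIidPl.
have key (B C : {set T}) : B \subset X -> C \subset Y ->
    ((B :|: C) :&: X = B) /\ ((B :|: C) :&: Y = C).
  move=> sBX sCY; split; apply/setP => e; rewrite !inE;
  have hB := subsetP sBX e; have hC := subsetP sCY e;
  have hd : e \in X -> e \in Y = false := @disjointFr _ X Y e dXY;
  move: hB hC hd; case: (e \in B); case: (e \in C); case: (e \in X); case: (e \in Y) => //= h1 h2 h3;
    solve [ by have := h1 isT | by have := h2 isT | by have := h3 isT ].
apply: eq_big => [[B C]|[B C]] /=.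
  apply/andP/andP => [[_ /eqP [<- <-]]|[sB sC]]; first by rewrite !subsetIr.
  have [-> ->] := key B C sB sC; split=> //.
  by rewrite setUSS.
by move=> /andP[_ /eqP [-> ->]].
Qed.

End Alg.

Section Main.
Variables (V E : finType) (ends : E -> V * V) (R : comRingType) (v : E -> R).
Implicit Types (A : {set E}) (W : {set V}).

Lemma adjI W A : adj ends W (A :&: ind_edges ends W) =2 adj ends W A.
Proof.
move=> x y; rewrite /adj; case xW: (x \in W); case yW: (y \in W) => //=.
apply: eq_existsb => e; rewrite !inE.
case/boolP: (_ || _) => H; last by rewrite !andbF.
rewrite !andbT; case/orP: H => /eqP -> /=; by rewrite xW yW !andbT.
Qed.

Lemma ncompI W A : ncomp ends W (A :&: ind_edges ends W) = ncomp ends W A.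
Proof.
rewrite /ncomp (@eq_in_imset _ _ _ (fun x => [set y in W | connect (adj ends W A) x y])) //.
by move=> x _; apply/setP => y; rewrite !inE (@eq_connect _ _ _ (adjI W A)).
Qed.

Lemma disjE W : [disjoint ind_edges ends W & ind_edges ends (~: W)].
Proof. by apply/pred0P => e /=; rewrite !inE; case: (_ \in W); rewrite ?andbF. Qed.

Lemma cfE W A : (A \subset ind_edges ends W :|: ind_edges ends (~: W)) = crossfree ends W A.
Proof.
apply/subsetP/forall_inP => H e eA; move: (H e eA); rewrite !inE;
  by case: ((ends e).1 \in W); case: ((ends e).2 \in W).
Qed.

Lemma prodI (T : finType) (A X Y : {set T}) (F : T -> R) :
  A \subset X :|: Y -> [disjoint X & Y] ->
  \prod_(e in A :&: X) F e * \prod_(e in A :&: Y) F e = \prod_(e in A) F e.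
Proof.
move=> sA dXY; rewrite [RHS](big_setID X); congr (_ * _).
apply: eq_bigl => e; rewrite !inE; case eA: (e \in A) => /=; rewrite ?andbT ?andbF //.
move: (subsetP sA e eA); rewrite inE; case eX: (e \in X) => /= h.
  by rewrite (disjointFr dXY eX).
by [].
Qed.

Lemma Zgen W (f g : nat -> R) :
 (\sum_(A : {set E} | A \subset ind_edges ends W) f (ncomp ends W A) * \prod_(e in A) v e) *
 (\sum_(A : {set E} | A \subset ind_edges ends (~: W)) g (ncomp ends (~: W) A) * \prod_(e in A) v e)
 = \sum_(A : {set E} | crossfree ends W A)
      f (ncomp ends W A) * g (ncomp ends (~: W) A) * \prod_(e in A) v e.
Proof.
rewrite (sum_split (fun A => f (ncomp ends W A) * \prod_(e in A) v e)
   (fun A => g (ncomp ends (~: W) A) * \prod_(e in A) v e) (disjE W)).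
apply: eq_big => A; first by rewrite cfE.
move=> sA; rewrite !ncompI mulrACA -mulrA (prodI _ sA (disjE W)).
by rewrite mulrA.
Qed.

Lemma Key1 A (q1 q2 : R) :
  \sum_(W : {set V} | crossfree ends W A) q1 ^+ ncomp ends W A * q2 ^+ ncomp ends (~: W) A
  = (q1 + q2) ^+ ncomp ends [set: V] A.
Proof.
rewrite ncomp_T -binom_sets.
rewrite -(@reindexW _ _ ends _ A (fun S => q1 ^+ #|S| * q2 ^+ #|Pc ends A :\: S|)).
by apply: eq_bigr => W cf; rewrite !ncomp_cf ?cf_setC // compC.
Qed.

Lemma Key2 A (q1 q2 : R) i :
  \sum_(W : {set V} | (i \in W) && crossfree ends W A)
     q1 ^+ (ncomp ends W A).-1 * q2 ^+ ncomp ends (~: W) A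
  = (q1 + q2) ^+ (ncomp ends [set: V] A).-1.
Proof.
rewrite ncomp_T -(@binom_sets1 _ _ _ (vcomp ends A i)) ?imset_f ?in_setT //.
rewrite -(@reindexW _ _ ends _ A (fun S => if vcomp ends A i \in S then
         q1 ^+ #|S|.-1 * q2 ^+ #|Pc ends A :\: S| else 0)).
rewrite (eq_bigl (fun W => crossfree ends W A && (i \in W))); last by move=> W; rewrite andbC.
rewrite big_mkcondr; apply: eq_bigr => W cf.
by rewrite -memi // !ncomp_cf ?cf_setC // compC.
Qed.

Lemma ZZ W (q1 q2 : R) : Zpot ends v W q1 * Zpot ends v (~: W) q2 =
  \sum_(A : {set E} | crossfree ends W A)
      q1 ^+ ncomp ends W A * q2 ^+ ncomp ends (~: W) A * \prod_(e in A) v e.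
Proof. exact: (Zgen W (fun n => q1 ^+ n) (fun n => q2 ^+ n)). Qed.

Lemma ZhZ W (q1 q2 : R) : Zhat ends v W q1 * Zpot ends v (~: W) q2 =
  \sum_(A : {set E} | crossfree ends W A)
      q1 ^+ (ncomp ends W A).-1 * q2 ^+ ncomp ends (~: W) A * \prod_(e in A) v e.
Proof. exact: (Zgen W (fun n => q1 ^+ n.-1) (fun n => q2 ^+ n)). Qed.

Lemma indT A : A \subset ind_edges ends [set: V].
Proof. by apply/subsetP => e _; rewrite !inE. Qed.

Lemma part1 (q1 q2 : R) : Zpot ends v [set: V] (q1 + q2)
        = \sum_(W : {set V}) Zpot ends v W q1 * Zpot ends v (~: W) q2.
Proof.
under eq_bigr => W _ do rewrite ZZ big_mkcond /=.
rewrite exchange_big /= /Zpot [LHS](eq_bigl xpredT); last by move=> A; rewrite indT.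
apply: eq_bigr => A _; by rewrite -big_mkcond /= -big_distrl /= Key1.
Qed.

Lemma part2 (q1 q2 : R) i : Zhat ends v [set: V] (q1 + q2)
   = \sum_(W : {set V} | i \in W) Zhat ends v W q1 * Zpot ends v (~: W) q2.
Proof.
under eq_bigr => W _ do rewrite ZhZ big_mkcond /=.
rewrite exchange_big /= /Zhat [LHS](eq_bigl xpredT); last by move=> A; rewrite indT.
apply: eq_bigr => A _; by rewrite -big_mkcondr /= -big_distrl /= Key2.
Qed.

End Main.

Section Main2.
Variables (V E : finType) (ends : E -> V * V) (R : comRingType) (v : E -> R).
Implicit Types (A : {set E}) (W : {set V}).

Lemma ncomp_gt0 W A : W != set0 -> (0 < ncomp ends W A)%N.
Proof.
case/set0Pn => x xW; rewrite /ncomp card_gt0; apply/set0Pn.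
by eexists; apply: imset_f xW.
Qed.

Lemma ZZhat W (q : R) : W != set0 -> Zpot ends v W q = q * Zhat ends v W q.
Proof.
move=> WN; rewrite /Zpot /Zhat mulr_sumr; apply: eq_bigr => A _.
by rewrite mulrA -exprS prednK // ncomp_gt0.
Qed.

Lemma Zhat0 W : W != set0 -> Zhat ends v W 0 = Cpot ends v W.
Proof.
move=> WN; rewrite /Zhat /Cpot big_mkcondr; apply: eq_bigr => A _.
rewrite expr0n; have := ncomp_gt0 A WN.
by case: (ncomp ends W A) => [|[|k]] //= _; rewrite ?mul1r ?mul0r.
Qed.

Lemma Z0 (q : R) : Zpot ends v set0 q = 1.
Proof.
rewrite /Zpot; have -> : ind_edges ends (set0 : {set V}) = set0 by apply/setP => e; rewrite !inE.
rewrite (eq_bigl (pred1 set0)) => [|A]; last by rewrite /= subset0.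
by rewrite big_pred1_eq big_set0 mulr1 /ncomp imset0 cards0.
Qed.

End Main2.

Unset Implicit Arguments.
Theorem proposition3p7 (R : comRingType) (V E : finType) (ends : E -> V * V)
  (loopless : forall e : E, (ends e).1 != (ends e).2)
  (Vne : (0 < #|V|)%N) (v : E -> R) (q q1 q2 : R) :
  [/\ Zpot ends v [set: V] (q1 + q2)
        = \sum_(W : {set V}) Zpot ends v W q1 * Zpot ends v (~: W) q2,
      (forall i : V,
        Zhat ends v [set: V] (q1 + q2)
          = \sum_(W : {set V} | i \in W) Zhat ends v W q1 * Zpot ends v (~: W) q2),
      (forall i : V,
        Zpot ends v [set: V] q
          = \sum_(W : {set V} | i \in W) q * Cpot ends v W * Zpot ends v (~: W) q)
    & (#|V|%:R * Zpot ends v [set: V] q2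
        = \sum_(W : {set V} | W != set0)
            ((q1 + q2) * #|W|%:R - q1 * #|V|%:R)
              * Zhat ends v W q1 * Zpot ends v (~: W) q2)].
Proof.
have VN : [set: V] != set0 by rewrite -card_gt0 cardsT.
split.
- exact: part1.
- exact: part2.
- move=> i; rewrite ZZhat //; have := part2 ends v 0 q i; rewrite add0r => ->.
  rewrite mulr_sumr; apply: eq_bigr => W iW.
  by rewrite Zhat0 ?mulrA //; apply/set0Pn; exists i.
have S1 : \sum_(W : {set V} | W != set0) #|W|%:R * (Zhat ends v W q1 * Zpot ends v (~: W) q2)
          = #|V|%:R * Zhat ends v [set: V] (q1 + q2).
  rewrite [LHS](big_mkcond (fun W : {set V} => W != set0)) /=.
  rewrite (eq_bigr (fun W : {set V} => \sum_(i : V) (if i \in W then Zhat ends v W q1 * Zpot ends v (~: W) q2 else 0))); last first.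
    move=> W _; case: eqP => [->|_] /=; first by rewrite big1 // => i; rewrite inE.
    by rewrite -big_mkcond /= sumr_const mulr_natl.
  rewrite exchange_big /=.
  rewrite (eq_bigr (fun=> Zhat ends v [set: V] (q1 + q2))); last first.
    by move=> i _; rewrite -big_mkcond /= -part2.
  rewrite (eq_bigl (mem [set: V])) ?sumr_const ?cardsT ?mulr_natl //.
  by move=> x; rewrite /= inE.
have S2 : \sum_(W : {set V} | W != set0) Zpot ends v W q1 * Zpot ends v (~: W) q2
          = Zpot ends v [set: V] (q1 + q2) - Zpot ends v [set: V] q2.
  by rewrite part1 [in RHS](bigD1 set0) //= Z0 setC0 mul1r addrC addrK.
rewrite (eq_bigr (fun W : {set V} => (q1 + q2) * (#|W|%:R * (Zhat ends v W q1 * Zpot ends v (~: W) q2))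
                         - #|V|%:R * (Zpot ends v W q1 * Zpot ends v (~: W) q2))); last first.
  by move=> W WN; rewrite (ZZhat ends v q1 WN); ring.
rewrite sumrB -!mulr_sumr /= S1 S2 (ZZhat ends v (q1 + q2) VN); ring.
Qed.
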